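(* If $(X,\mathcal{H})$ is a contraction flow, then $\mathcal{H}$ is a continuous absorptive action on $X$.
   Context: An $\mathbb{R}$-group is an abelian group $E$ (operation written multiplicatively) whose underlying set is a subset of $\mathbb{R}$ containing all positive integers, such that: (RG1) with the natural order of $\mathbb{R}$, $E$ is a totally ordered group; (RG2) with the topology induced from $\mathbb{R}$, $E$ is a locally compact group; (RG3) there is a nonconstant continuous homomorphism $h:E\to\mathbb{R}_+^*$ such that for every $\alpha\in E$ the set $\{\varepsilon\in E:\varepsilon\ge\alpha\}$ is integrable for $h\cdot m$, $m$ a Haar measure on $E$. $e$ is the identity of $E$, $\varepsilon^{-1}$ the group inverse; inequalities refer to the order of $\mathbb{R}$. An action of $E$ on $X$ is a family $(H_\varepsilon)_{\varepsilon\in E}$ of bijections of $X$ with $H_\varepsilon\circ H_{\varepsilon'}=H_{\varepsilon\varepsilon'}$, $H_e=\mathrm{id}_X$; continuous if $(\varepsilon,x)\mapsto H_\varepsilon(x)$ is continuous on $E\times X$; absorptive if some $\omega\in X$ satisfies: for every neighbourhood $V$ of $\omega$ and every $x\in X$ there are a neighbourhood $U$ of $x$ and $\alpha\in E$ with $H_{\varepsilon^{-1}}(U)\subset V$ for all $\varepsilon\le\alpha$. A contraction flow is a pair $(X,\mathcal{H})$ where $X$ is a complete locally compact metric space (metric $d$) not reduced to one point, and $\mathcal{H}=(H_\varepsilon)_{\varepsilon\in E}$ is an action of an $\mathbb{R}$-group $E$ on $X$ such that: (i) for each $x\in X$, $\varepsilon\mapsto H_\varepsilon(x)$ is continuous $E\to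 X$; (ii) for each $\varepsilon\in E$, $\sup_{x\neq y} d(H_\varepsilon(x),H_\varepsilon(y))/d(x,y)<+\infty$; (iii) $\lim_{\varepsilon\to+\infty}\sup_{x\neq y} d(H_\varepsilon(x),H_\varepsilon(y))/d(x,y)=0$. *)

(* Defs.v *)
From Stdlib Require Import Reals List.
Open Scope R_scope.

(* R-groups.  E is given as a subset [E : R -> Prop] of R together with *)
(* an abstract (multiplicatively written) group law [mul], unit [e],   *)
(* inverse [inv]; only their behaviour on E matters.                   *)

Definition abelian_group_on (E : R -> Prop) (mul : R -> R -> R) (e : R)
    (inv : R -> R) : Prop :=
  (forall x y, E x -> E y -> E (mul x y)) /\
  E e /\
  (forall x, E x -> E (inv x)) /\
  (forall x y z, E x -> E y -> E z -> mul (mul x y) z = mul x (mul y z)) /\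
  (forall x y, E x -> E y -> mul x y = mul y x) /\
  (forall x, E x -> mul e x = x) /\
  (forall x, E x -> mul (inv x) x = e).

Definition cont_on (E : R -> Prop) (f : R -> R) : Prop :=
  forall x, E x -> forall eps, 0 < eps -> exists del, 0 < del /\
    forall y, E y -> Rabs (y - x) < del -> Rabs (f y - f x) < eps.

Definition cont2_on (E : R -> Prop) (f : R -> R -> R) : Prop :=
  forall x y, E x -> E y -> forall eps, 0 < eps -> exists del, 0 < del /\
    forall x' y', E x' -> E y' -> Rabs (x' - x) < del -> Rabs (y' - y) < del ->
      Rabs (f x' y' - f x y) < eps.

Definition lsc_on (E : R -> Prop) (f : R -> R) : Prop :=
  forall x, E x -> forall eps, 0 < eps -> exists del, 0 < del /\
    forall y, E y -> Rabs (y - x) < del -> f x - eps < f y.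

Definition locally_compact_sub (E : R -> Prop) : Prop :=
  forall x, E x -> exists K : R -> Prop, compact K /\
    (forall y, K y -> E y) /\
    exists del, 0 < del /\ forall y, E y -> Rabs (y - x) < del -> K y.

Definition RG1 (E : R -> Prop) (mul : R -> R -> R) : Prop :=
  forall x y z, E x -> E y -> E z -> x <= y -> mul x z <= mul y z.

Definition RG2 (E : R -> Prop) (mul : R -> R -> R) (inv : R -> R) : Prop :=
  cont2_on E mul /\ cont_on E inv /\ locally_compact_sub E.

Definition Cc (E : R -> Prop) (g : R -> R) : Prop :=
  cont_on E g /\
  exists K : R -> Prop, compact K /\ (forall y, K y -> E y) /\
    (forall x, E x -> ~ K x -> g x = 0).

(* A Haar measure on E, given as its (Radon) integral: a nonzero positive
   linear functional on C_c(E), invariant under translations of E. *)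
Definition haar_integral (E : R -> Prop) (mul : R -> R -> R)
    (I : (R -> R) -> R) : Prop :=
  (forall g g', Cc E g -> (forall x, E x -> g x = g' x) -> I g = I g') /\
  (forall g1 g2, Cc E g1 -> Cc E g2 -> I (fun x => g1 x + g2 x) = I g1 + I g2) /\
  (forall c g, Cc E g -> I (fun x => c * g x) = c * I g) /\
  (forall g, Cc E g -> (forall x, E x -> 0 <= g x) -> 0 <= I g) /\
  (forall a g, E a -> Cc E g -> I (fun x => g (mul a x)) = I g) /\
  (exists g, Cc E g /\ (forall x, E x -> 0 <= g x) /\ 0 < I g).

(* Integrability of a nonnegative upper semicontinuous function f for the
   measure with integral I: finiteness of the upper integral, i.e. f is
   dominated by a lower semicontinuous phi whose (inner) integral
   sup { I g | g in C_c(E), 0 <= g <= phi } is finite. *)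
Definition integrable_usc (E : R -> Prop) (I : (R -> R) -> R) (f : R -> R) : Prop :=
  exists M phi, lsc_on E phi /\ (forall x, E x -> f x <= phi x) /\
    forall g, Cc E g -> (forall x, E x -> 0 <= g x <= phi x) -> I g <= M.

Definition RG3 (E : R -> Prop) (mul : R -> R -> R) : Prop :=
  exists h : R -> R,
    (forall x, E x -> 0 < h x) /\
    (forall x y, E x -> E y -> h (mul x y) = h x * h y) /\
    cont_on E h /\
    (exists x y, E x /\ E y /\ h x <> h y) /\
    exists I, haar_integral E mul I /\
      forall alpha, E alpha ->
        integrable_usc E I
          (fun x => h x * (if Rle_dec alpha x then 1 else 0)).

Definition R_group (E : R -> Prop) (mul : R -> R -> R) (e : R) (inv : R -> R)
  : Prop :=
  abelian_group_on E mul e inv /\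
  (forall n : nat, E (INR (S n))) /\
  RG1 E mul /\ RG2 E mul inv /\ RG3 E mul.

Section MS.
Variable M : Metric_Space.
Let X := Base M.
Let d := dist M.

Definition ms_open (U : X -> Prop) : Prop :=
  forall x, U x -> exists r, 0 < r /\ forall y, d x y < r -> U y.

Definition ms_nbhd (x : X) (V : X -> Prop) : Prop :=
  exists r, 0 < r /\ forall y, d x y < r -> V y.

Definition ms_compact (K : X -> Prop) : Prop :=
  forall (J : Type) (U : J -> X -> Prop),
    (forall j, ms_open (U j)) -> (forall x, K x -> exists j, U j x) ->
    exists l : list J, forall x, K x -> exists j, In j l /\ U j x.

Definition ms_locally_compact : Prop :=
  forall x, exists K, ms_compact K /\ ms_nbhd x K.

Definition ms_cauchy (u : nat -> X) : Prop :=
  forall eps, 0 < eps -> exists N, forall n m, (n >= N)%nat -> (m >= N)%nat ->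
    d (u n) (u m) < eps.

Definition ms_complete : Prop :=
  forall u, ms_cauchy u -> exists l, forall eps, 0 < eps -> exists N,
    forall n, (n >= N)%nat -> d (u n) l < eps.
End MS.

(* H : R -> X -> X, only relevant for indices in E.                    *)

Definition action (E : R -> Prop) (mul : R -> R -> R) (e : R)
    (M : Metric_Space) (H : R -> Base M -> Base M) : Prop :=
  (forall eps, E eps ->
     (forall x y, H eps x = H eps y -> x = y) /\ (forall y, exists x, H eps x = y)) /\
  (forall eps eps', E eps -> E eps' -> forall x, H eps (H eps' x) = H (mul eps eps') x) /\
  (forall x, H e x = x).

Definition contraction_flow (E : R -> Prop) (mul : R -> R -> R) (e : R)
    (inv : R -> R) (M : Metric_Space) (H : R -> Base M -> Base M) : Prop :=
  ms_complete M /\ ms_locally_compact M /\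
  (exists x y : Base M, x <> y) /\
  R_group E mul e inv /\
  action E mul e M H /\
  (forall x, forall eps, E eps -> forall eta, 0 < eta -> exists del, 0 < del /\
     forall eps', E eps' -> Rabs (eps' - eps) < del ->
       dist M (H eps x) (H eps' x) < eta) /\
  (forall eps, E eps -> exists L, forall x y, x <> y ->
     dist M (H eps x) (H eps y) / dist M x y <= L) /\
  (forall eta, 0 < eta -> exists A, forall eps, E eps -> A <= eps ->
     forall x y, x <> y -> dist M (H eps x) (H eps y) / dist M x y <= eta).

Definition continuous_action (E : R -> Prop) (M : Metric_Space)
    (H : R -> Base M -> Base M) : Prop :=
  forall eps x, E eps -> forall eta, 0 < eta -> exists del, 0 < del /\
    forall eps' x', E eps' -> Rabs (eps' - eps) < del -> dist M x x' < del ->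
      dist M (H eps x) (H eps' x') < eta.

Definition absorptive (E : R -> Prop) (inv : R -> R) (M : Metric_Space)
    (H : R -> Base M -> Base M) : Prop :=
  exists omega : Base M, forall V, ms_nbhd M omega V -> forall x,
    exists U, ms_nbhd M x U /\ exists alpha, E alpha /\
      forall eps, E eps -> eps <= alpha -> forall u, U u -> V (H (inv eps) u).

(* Main.v *)
Require Import Defs.
From Stdlib Require Import Reals Lra Lia.
Open Scope R_scope.

Lemma lip_bound (M : Metric_Space) (f : Base M -> Base M) (L : R) :
  (forall x y, x <> y -> dist M (f x) (f y) / dist M x y <= L) ->
  forall x y, dist M (f x) (f y) <= Rmax 0 L * dist M x y.
Proof.
  intros HL x y.
  destruct (Classical_Prop.classic (x = y)) as [<-|Hne].
  - assert (dist M (f x) (f x) = 0) by (apply dist_refl; auto).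
    assert (dist M x x = 0) by (apply dist_refl; auto). rewrite H, H0. lra.
  - assert (Hd : dist M x y > 0).
    { destruct (dist_pos M x y) as [h|h]; auto. exfalso; apply Hne; apply dist_refl; auto. }
    specialize (HL x y Hne).
    assert (Hm : L <= Rmax 0 L) by apply Rmax_r.
    assert (dist M (f x) (f y) = dist M (f x) (f y) / dist M x y * dist M x y) by (field; lra).
    rewrite H. apply Rmult_le_compat_r; lra.
Qed.

Lemma banach (M : Metric_Space) (f : Base M -> Base M) :
  ms_complete M -> (exists x0 : Base M, True) ->
  (forall x y, dist M (f x) (f y) <= / 2 * dist M x y) ->
  exists w, f w = w.
Proof.
  intros Hc [x0 _] Hf.
  set (u := fun n => Nat.iter n f x0).
  set (D := dist M x0 (f x0)).
  assert (HD : 0 <= D) by (pose proof (dist_pos M x0 (f x0)); unfold D; lra).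
  assert (Hstep : forall n, dist M (u n) (u (S n)) <= (/2)^n * D).
  { induction n. simpl. unfold u, D; simpl. lra. simpl.
    change (u (S n)) with (f (u n)). change (u (S (S n))) with (f (u (S n))).
    eapply Rle_trans; [apply Hf|]. rewrite Rmult_assoc. apply Rmult_le_compat_l. lra. exact IHn. }
  assert (Hk : forall n k, dist M (u n) (u (n + k)%nat) <= 2 * (/2)^n * D - 2 * (/2)^(n+k) * D).
  { intros n k; induction k.
    - rewrite Nat.add_0_r. assert (dist M (u n) (u n) = 0) by (apply dist_refl; auto). lra.
    - eapply Rle_trans; [apply (dist_tri M _ _ (u (n+k)%nat))|].
      replace (n + S k)%nat with (S (n + k)) by lia.
      pose proof (Hstep (n+k)%nat). change ((/2)^(S (n+k))) with (/2 * (/2)^(n+k)). lra. }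
  assert (Hpos : forall n, 0 <= (/2)^n) by (intro; apply pow_le; lra).
  assert (Hnm : forall n m, (n <= m)%nat -> dist M (u n) (u m) <= 2 * (/2)^n * D).
  { intros n m Hle. replace m with (n + (m - n))%nat by lia.
    pose proof (Hk n (m-n)%nat). pose proof (Hpos (n + (m-n))%nat). nra. }
  assert (Hcau : ms_cauchy M u).
  { intros eps Heps.
    assert (Hy : 0 < eps / (2*D+1)) by (apply Rdiv_lt_0_compat; lra).
    destruct (pow_lt_1_zero (/2) ltac:(rewrite Rabs_pos_eq; lra) _ Hy) as [N HN].
    exists N. intros n m Hn Hm.
    assert (Hlt : forall p, (p >= N)%nat -> 2 * (/2)^p * D < eps).
    { intros p Hp. specialize (HN p Hp). rewrite Rabs_pos_eq in HN by apply Hpos.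
      assert (eps / (2*D+1) * (2*D+1) = eps) by (field; lra).
      pose proof (Hpos p). nra. }
    destruct (Nat.le_ge_cases n m) as [h|h].
    - pose proof (Hnm n m h). pose proof (Hlt n Hn). lra.
    - pose proof (Hnm m n h). pose proof (Hlt m Hm). rewrite dist_sym. lra. }
  destruct (Hc u Hcau) as [l Hl].
  exists l. apply dist_refl.
  destruct (dist_pos M (f l) l) as [Hgt|]; auto. exfalso.
  set (d0 := dist M (f l) l) in *.
  destruct (Hl (d0/2) ltac:(lra)) as [N HN].
  pose proof (HN N (le_n _)). pose proof (HN (S N) (le_S _ _ (le_n _))).
  pose proof (dist_tri M (f l) l (u (S N))).
  change (u (S N)) with (f (u N)) in *.
  pose proof (Hf l (u N)). rewrite (dist_sym M l (u N)) in H2.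
  unfold d0 in *. lra.
Qed.
Lemma big_elem (E : R -> Prop) : (forall n : nat, E (INR (S n))) ->
  forall A, exists t, E t /\ A <= t.
Proof.
  intros HE A. destruct (INR_unbounded A) as [n Hn].
  exists (INR (S n)). split; auto. rewrite S_INR. lra.
Qed.

Theorem proposition2p5 (E : R -> Prop) (mul : R -> R -> R) (e : R) (inv : R -> R)
    (M : Metric_Space) (H : R -> Base M -> Base M) :
  contraction_flow E mul e inv M H ->
  action E mul e M H /\ continuous_action E M H /\ absorptive E inv M H.
Proof.
  intros (Hcomp & _ & Hnt & HRG & Hact & Hi & Hii & Hiii).
  destruct HRG as [Hgrp [HN [HRG1 [[Hmulc _] _]]]].
  destruct Hgrp as (Hmul & He & Hinv & Hassoc & Hcomm & Hid & Hlinv).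
  destruct Hact as [Hbij [Hcomp_act He_act]].
  assert (Hcan1 : forall a b, E a -> E b -> mul (inv a) (mul a b) = b).
  { intros a b Ha Hb. rewrite <- Hassoc by auto. rewrite Hlinv by auto. auto. }
  assert (Hcan2 : forall a b, E a -> E b -> mul a (mul (inv a) b) = b).
  { intros a b Ha Hb. rewrite <- Hassoc by auto. rewrite (Hcomm a (inv a)) by auto.
    rewrite Hlinv by auto. auto. }
  assert (Hinvinv : forall a, E a -> inv (inv a) = a).
  { intros a Ha. pose proof (Hcan1 (inv a) a (Hinv a Ha) Ha) as Hq.
    rewrite Hlinv, Hcomm, Hid in Hq by auto. exact Hq. }
  split; [split; auto|split].
  -
    intros eps x Heps eta Heta.
    destruct (Hiii 1 ltac:(lra)) as [A1 HA1].
    destruct (big_elem E HN (A1 + 1)) as [t [Ht HtA]].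
    set (c := mul (inv eps) t).
    assert (Hc : E c) by (unfold c; auto).
    assert (Hepsc : mul eps c = t) by (unfold c; auto).
    destruct (Hii (inv c) (Hinv c Hc)) as [Lc HLc].
    set (K := Rmax 0 Lc).
    assert (HK : 0 <= K) by apply Rmax_l.
    destruct (Hi x eps Heps (eta/2) ltac:(lra)) as [d1 [Hd1 Hd1']].
    destruct (Hmulc eps c Heps Hc 1 ltac:(lra)) as [d2 [Hd2 Hd2']].
    set (d3 := eta / (2 * (K+1))).
    assert (Hd3 : 0 < d3) by (unfold d3; apply Rdiv_lt_0_compat; lra).
    exists (Rmin d1 (Rmin d2 d3)). split.
    { apply Rmin_pos; auto. apply Rmin_pos; auto. }
    intros eps' x' Heps' Hdeps Hdx.
    pose proof (Rmin_l d1 (Rmin d2 d3)). pose proof (Rmin_r d1 (Rmin d2 d3)).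
    pose proof (Rmin_l d2 d3). pose proof (Rmin_r d2 d3).
    assert (Hm : A1 <= mul eps' c).
    { assert (Rabs (c - c) < d2) by (rewrite Rminus_diag, Rabs_R0; lra).
      specialize (Hd2' eps' c Heps' Hc ltac:(lra) H4).
      rewrite Hepsc in Hd2'. apply Rabs_def2 in Hd2'. lra. }
    assert (Hrw : forall z, H eps' z = H (inv c) (H (mul eps' c) z)).
    { intro z. rewrite Hcomp_act by auto. rewrite (Hcomm eps' c) by auto.
      rewrite Hcan1 by auto. reflexivity. }
    assert (Hlip : dist M (H eps' x) (H eps' x') <= K * dist M x x').
    { rewrite !Hrw. eapply Rle_trans; [apply (lip_bound M _ Lc HLc)|].
      fold K. apply Rmult_le_compat_l; auto.
      eapply Rle_trans; [apply (lip_bound M _ 1 (HA1 _ (Hmul _ _ Heps' Hc) Hm))|].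
      rewrite Rmax_right by lra. lra. }
    pose proof (Hd1' eps' Heps' ltac:(lra)).
    pose proof (dist_tri M (H eps x) (H eps' x') (H eps' x)).
    assert (K * dist M x x' <= K * d3) by (apply Rmult_le_compat_l; lra).
    assert (K * d3 < eta / 2).
    { unfold d3. apply (Rmult_lt_reg_r (2*(K+1))); [lra|].
      replace (K * (eta / (2 * (K + 1))) * (2 * (K + 1))) with (K * eta) by (field; lra).
      nra. }
    lra.
  -
    destruct (Hiii (/2) ltac:(lra)) as [A2 HA2].
    destruct (big_elem E HN A2) as [t0 [Ht0 Ht0A]].
    destruct (banach M (H t0) Hcomp ltac:(destruct Hnt as [a _]; exists a; auto))
      as [w Hw].
    { intros a b. eapply Rle_trans; [apply (lip_bound M _ _ (HA2 t0 Ht0 Ht0A))|].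
      rewrite Rmax_right by lra. lra. }
    assert (Hfix : forall s, E s -> H s w = w).
    { intros s Hs.
      assert (Hh : H t0 (H s w) = H s w).
      { rewrite Hcomp_act by auto. rewrite Hcomm by auto.
        rewrite <- Hcomp_act by auto. rewrite Hw. reflexivity. }
      apply dist_refl.
      pose proof (lip_bound M _ _ (HA2 t0 Ht0 Ht0A) (H s w) w).
      rewrite Hh, Hw in H0. rewrite Rmax_right in H0 by lra.
      pose proof (dist_pos M (H s w) w). lra. }
    exists w. intros V [r [Hr HV]] x.
    set (D := dist M w x).
    assert (HD : 0 <= D) by (pose proof (dist_pos M w x); unfold D; lra).
    set (eta := r / (2 * (D + 1))).
    assert (Heta : 0 < eta) by (unfold eta; apply Rdiv_lt_0_compat; lra).
    destruct (Hiii eta Heta) as [A3 HA3].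
    destruct (big_elem E HN A3) as [t [Ht HtA]].
    exists (fun u => dist M x u < 1). split.
    { exists 1. split; [lra|]. auto. }
    exists (inv t). split; [auto|].
    intros eps Heps Hle u Hu.
    assert (Hge : t <= inv eps).
    { set (z := mul t (inv eps)).
      assert (Hz : E z) by (unfold z; auto).
      pose proof (HRG1 eps (inv t) z Heps (Hinv t Ht) Hz Hle).
      unfold z in H0. rewrite (Hcomm t (inv eps)) in H0 by auto.
      rewrite Hcan2 in H0 by auto. rewrite (Hcomm (inv eps) t) in H0 by auto.
      rewrite Hcan1 in H0 by auto. exact H0. }
    apply HV.
    rewrite <- (Hfix (inv eps) (Hinv eps Heps)) at 1.
    eapply Rle_lt_trans;
      [apply (lip_bound M _ _ (HA3 (inv eps) (Hinv eps Heps) ltac:(lra)))|].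
    rewrite Rmax_right by lra.
    pose proof (dist_tri M w u x). fold D in H0.
    assert (dist M w u < D + 1) by lra.
    assert (eta * dist M w u <= eta * (D + 1)).
    { apply Rmult_le_compat_l; lra. }
    assert (eta * (D + 1) = r / 2) by (unfold eta; field; lra).
    lra.
Qed.
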